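(* Let $g$ be a nondegenerate symmetric bilinear form on $\mathbb{R}^n$ with $n_-(g)=1$, $R:[0,1]\to\mathcal L(\mathbb{R}^n)$ a continuous map of $g$-symmetric operators, $P\subset\mathbb{R}^n$ a subspace on which $g$ is nondegenerate, $S:P\to P$ $g$-symmetric, and $Y$ a solution of $Y''=RY$ with $g(Y,Y)<0$ on $[0,1]$. Then for all $t\in]0,1]$ the spaces $\mathcal K_t$ and $\mathcal S_t$ are orthogonal with respect to $I_t$; moreover $\hat{\mathcal K}_0$ and $\hat{\mathcal S}_0$ are orthogonal with respect to $C_0$.
   Context: For $t\in]0,1]$: $\mathcal H_t=\{V\in H^1([0,t],\mathbb{R}^n):V(0)\in P,V(t)=0\}$, $I_t(V,W)=\int_0^t[g(V',W')+g(RV,W)]ds-g(S[V(0)],W(0))$, $\mathcal K_t=\{V\in\mathcal H_t:g(V',Y)-g(V,Y')\text{ constant a.e. on }[0,t]\}$, $\mathcal S_t=\{f\,Y|_{[0,t]}:f\in H^1_0([0,t],\mathbb{R})\}$ ($H^1_0$: $H^1$ functions vanishing at both endpoints). $\mathcal H=\mathcal H_1$, $\hat{\mathcal K}_0=\{\hat V\in\mathcal H:g(\hat V',Y(0))\text{ constant a.e.}\}$, $\hat{\mathcal S}_0=\{\hat f\,Y(0):\hat f\in H^1_0([0,1],\mathbb{R})\}$, $C_0(\hat V,\hat W)=\int_0^1g(\hat V',\hat W')du$. *)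

(* Defs.v *)
From HB Require Import structures.
From mathcomp Require Import all_boot all_order all_algebra.
From mathcomp Require Import all_classical all_reals all_analysis.
Set Implicit Arguments. Unset Strict Implicit. Unset Printing Implicit Defensive.
Import Order.TTheory GRing.Theory Num.Theory.
Import numFieldNormedType.Exports.
Local Open Scope classical_set_scope.
Local Open Scope ring_scope.

Section Defs.
Variables (R : realType) (n : nat).

(* Vectors of R^n are row vectors 'rV[R]_n; a bilinear form g is given by its
   Gram matrix G: g(x,y) = x G y^T.  Linear operators act on the right. *)
Definition bform (G : 'M[R]_n) (x y : 'rV[R]_n) : R := (x *m G *m y^T) 0 0.

Definition pl_symmetric_form (G : 'M[R]_n) :=
  forall x y, bform G x y = bform G y x.

Definition pl_nondegenerate_form (G : 'M[R]_n) :=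
  forall x, (forall y, bform G x y = 0) -> x = 0.

Definition neg_definite_on (G : 'M[R]_n) (U : 'M[R]_n) :=
  forall v : 'rV[R]_n, (v <= U)%MS -> v != 0 -> bform G v v < 0.

Definition neg_index (G : 'M[R]_n) (k : nat) :=
  (exists U : 'M[R]_n, \rank U = k /\ neg_definite_on G U) /\
  (forall U : 'M[R]_n, neg_definite_on G U -> (\rank U <= k)%N).

Definition g_symmetric (G A : 'M[R]_n) :=
  forall x y, bform G (x *m A) y = bform G x (y *m A).

Definition pl_nondegenerate_on (G Pm : 'M[R]_n) :=
  forall x, (x <= Pm)%MS -> (forall y, (y <= Pm)%MS -> bform G x y = 0) -> x = 0.

(* S : P -> P (given by a matrix, only its restriction to P matters) is g-symmetric *)
Definition g_symmetric_on (G Pm S : 'M[R]_n) :=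
  (forall x : 'rV[R]_n, (x <= Pm)%MS -> (x *m S <= Pm)%MS) /\
  (forall x y, (x <= Pm)%MS -> (y <= Pm)%MS -> bform G (x *m S) y = bform G x (y *m S)).

Definition mu := @lebesgue_measure R.

(* H^1([0,t], R): f is absolutely continuous with L^2 derivative f',
   i.e. f(s) = f(0) + int_0^s f' for s in [0,t], with f' in L^2([0,t]). *)
Definition H1s (t : R) (f f' : R -> R) :=
  mu.-integrable `[0, t] (EFin \o f') /\
  mu.-integrable `[0, t] (EFin \o (fun s => f' s ^+ 2)) /\
  forall s, s \in `[0, t] -> f s = f 0 + Rintegral mu `[0, s] f'.

Definition H1 (t : R) (V V' : R -> 'rV[R]_n) :=
  forall i : 'I_n, H1s t (fun s => V s 0 i) (fun s => V' s 0 i).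

Definition Hspace (Pm : 'M[R]_n) (t : R) (V V' : R -> 'rV[R]_n) :=
  H1 t V V' /\ (V 0 <= Pm)%MS /\ V t = 0.

Definition Kspace (G Pm : 'M[R]_n) (Y Y' : R -> 'rV[R]_n) (t : R)
    (V V' : R -> 'rV[R]_n) :=
  Hspace Pm t V V' /\
  exists c : R, {ae mu, forall s, s \in `[0, t] ->
     bform G (V' s) (Y s) - bform G (V s) (Y' s) = c}.

Definition Sspace (Y : R -> 'rV[R]_n) (t : R) (W W' : R -> 'rV[R]_n) :=
  H1 t W W' /\
  exists f f' : R -> R, [/\ H1s t f f', f 0 = 0, f t = 0 &
     forall s, s \in `[0, t] -> W s = f s *: Y s].

Definition Iform (G S : 'M[R]_n) (Rc : R -> 'M[R]_n) (t : R)
    (V V' W W' : R -> 'rV[R]_n) : R :=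
  Rintegral mu `[0, t]
    (fun s => bform G (V' s) (W' s) + bform G (V s *m Rc s) (W s))
  - bform G (V 0 *m S) (W 0).

Definition K0hat (G Pm : 'M[R]_n) (Y : R -> 'rV[R]_n) (V V' : R -> 'rV[R]_n) :=
  Hspace Pm 1 V V' /\
  exists c : R, {ae mu, forall s, s \in `[0, 1] -> bform G (V' s) (Y 0) = c}.

Definition S0hat (Y : R -> 'rV[R]_n) (W W' : R -> 'rV[R]_n) :=
  H1 1 W W' /\
  exists f f' : R -> R, [/\ H1s 1 f f', f 0 = 0, f 1 = 0 &
     forall s, s \in `[0, 1] -> W s = f s *: Y 0].

Definition C0 (G : 'M[R]_n) (V' W' : R -> 'rV[R]_n) : R :=
  Rintegral mu `[0, 1] (fun s => bform G (V' s) (W' s)).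

End Defs.

(* Main.v *)
Require Import Defs.
From HB Require Import structures.
From mathcomp Require Import all_boot all_order all_algebra.
From mathcomp Require Import all_classical all_reals all_analysis.
From mathcomp Require Import measurable_realfun.
From mathcomp Require Import ring lra.
Set Implicit Arguments. Unset Strict Implicit. Unset Printing Implicit Defensive.
Import Order.TTheory GRing.Theory Num.Theory.
Import numFieldNormedType.Exports.
Local Open Scope classical_set_scope.
Local Open Scope ring_scope.

Section H.
Context {R : realType}.
Notation mu := (@lebesgue_measure R).

Lemma inIcc (x a b : R) : (x \in `[a, b]%classic) = (a <= x <= b).
Proof. by rewrite mem_setE in_itv. Qed.

Lemma EFin_Rint (D : set R) f : measurable D -> mu.-integrable D (EFin \o f) ->
  (\int[mu]_(x in D) f x)%:E = (\int[mu]_(x in D) (f x)%:E)%E.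
Proof. by move=> mD i; rewrite /Rintegral fineK //; exact: integrable_fin_num. Qed.

Lemma integrable_restrT (D : set R) f : measurable D ->
  mu.-integrable D (EFin \o f) -> mu.-integrable setT (EFin \o (f \_ D)).
Proof.
move=> mD i; rewrite -restrict_EFin; apply/integrable_restrict => //.
by rewrite setTI.
Qed.

Lemma meas_set_ler (g h : R * R -> R) :
  measurable_fun setT g -> measurable_fun setT h ->
  measurable [set z | g z <= h z].
Proof.
move=> mg mh.
have := measurable_fun_ler mg mh measurableT (Y := [set true]) I.
by rewrite setTI; congr measurable.
Qed.

Lemma int_mul_cont (a b : R) (f g : R -> R) : 
  mu.-integrable `[a, b] (EFin \o f) -> {within `[a, b], continuous g} ->
  mu.-integrable `[a, b] (EFin \o (fun x => f x * g x)).
Proof.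
move=> fi gc.
have -> : EFin \o (fun x => f x * g x) = ((EFin \o f) \* (EFin \o g))%E by [].
apply: integrableMl => //.
- exact: subspace_continuous_measurable_fun.
- have /compact_bounded[M [_ mrt]] := continuous_compact gc (@segment_compact _ a b).
  by exists M; split; rewrite ?num_real // => ? ? ? ?; exact: mrt.
Qed.

Lemma prim_cont (t : R) (f : R -> R) : 0 <= t -> mu.-integrable `[0, t] (EFin \o f) ->
  {within `[0, t], continuous (fun x => \int[mu]_(y in `[0, x]) f y)}.
Proof. move=> t0 fi; exact: (@parameterized_integral_continuous R 0 t f t0 fi). Qed.

Lemma prim_diff (t y : R) (f : R -> R) : mu.-integrable `[0, t] (EFin \o f) ->
  0 <= y -> y <= t ->
  \int[mu]_(x in `[y, t]) f x =
  \int[mu]_(x in `[0, t]) f x - \int[mu]_(x in `[0, y]) f x.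
Proof.
move=> fi y0 yt.
rewrite (@Rintegral_itvB _ f (BLeft 0) (BRight t) y) ?bnd_simp //.
rewrite Rintegral_itv_obnd_cbnd //.
by apply: integrableS fi => //; apply: subset_itvr; rewrite bnd_simp.
Qed.

Lemma ibp_core (t : R) (u' v' : R -> R) : 0 <= t ->
  mu.-integrable `[0, t] (EFin \o u') -> mu.-integrable `[0, t] (EFin \o v') ->
  \int[mu]_(s in `[0, t]) (u' s * \int[mu]_(r in `[0, s]) v' r) =
  (\int[mu]_(s in `[0, t]) u' s) * (\int[mu]_(r in `[0, t]) v' r)
  - \int[mu]_(r in `[0, t]) ((\int[mu]_(s in `[0, r]) u' s) * v' r).
Proof.
move=> t0 iu iv.
pose U x := \int[mu]_(s in `[0, x]) u' s.
pose V x := \int[mu]_(s in `[0, x]) v' s.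
have cU := @prim_cont t u' t0 iu.
have cV := @prim_cont t v' t0 iv.
have iuV := int_mul_cont iu cV.
have iUv := int_mul_cont iv cU.
pose a := u' \_ `[0, t]; pose b := v' \_ `[0, t].
pose T := [set z : R * R | 0 <= z.2 /\ z.2 <= z.1 /\ z.1 <= t].
pose F := (fun z : R * R => (a z.1 * b z.2)%:E) \_ T.
have ia : mu.-integrable setT (EFin \o a) by exact: integrable_restrT.
have ib : mu.-integrable setT (EFin \o b) by exact: integrable_restrT.
have ma : measurable_fun setT a by apply/measurable_EFinP; exact: measurable_int ia.
have mb : measurable_fun setT b by apply/measurable_EFinP; exact: measurable_int ib.
have mT : measurable T.
  have -> : T = [set z | 0 <= z.2] `&` [set z | z.2 <= z.1] `&` [set z | z.1 <= t].
    by apply/seteqP; split => z /=; [move=> [? [? ?]]|move=> [[? ?] ?]].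
  apply: measurableI; first apply: measurableI.
  - by apply: meas_set_ler => //; exact: measurable_snd.
  - by apply: meas_set_ler; [exact: measurable_snd|exact: measurable_fst].
  - by apply: meas_set_ler => //; exact: measurable_fst.
have mab : measurable_fun setT (fun z : R * R => a z.1 * b z.2).
  apply: measurable_funM.
  - exact: measurableT_comp ma measurable_fst.
  - exact: measurableT_comp mb measurable_snd.
have mF : measurable_fun setT F.
  apply/(measurable_restrictT _ _).1 => //.
  apply/measurable_EFinP; exact: measurable_funS mab.
have iF : (mu \x mu)%E.-integrable setT F.
  apply/integrable12ltyP => //.
  pose G := fun z : R * R => (`|a z.1| * `|b z.2|)%:E.
  have mG : measurable_fun setT G.
    apply/measurable_EFinP; apply: measurable_funM.
    - exact: measurableT_comp (measurableT_comp ma measurable_fst).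
    - exact: measurableT_comp (measurableT_comp mb measurable_snd).
  have maF : measurable_fun setT (abse \o F) by exact: measurableT_comp.
  apply: (@le_lt_trans _ _ (\int[mu]_x \int[mu]_y G (x, y))%E).
    apply: ge0_le_integral => //.
    - by move=> x _; exact: integral_ge0.
    - exact: (@measurable_fun_fubini_tonelli_F _ _ _ _ R mu (abse \o F) maF (fun z => abse_ge0 _)).
    - apply: (@measurable_fun_fubini_tonelli_F _ _ _ _ R mu G mG).
      by move=> z; rewrite /G lee_fin mulr_ge0.
    move=> x _; apply: ge0_le_integral => //.
    - exact: measurable_fun_pair2 maF.
    - exact: measurable_fun_pair2 mG.
    move=> y _; rewrite /F /G patchE; case: ifP => _ /=.
      by rewrite normrM.
    by rewrite normr0 lee_fin mulr_ge0.
  have ->: (\int[mu]_x \int[mu]_y G (x, y) =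
            \int[mu]_x (`|a x|%:E * \int[mu]_y `|b y|%:E))%E.
    apply: eq_integral => x _; rewrite /G /=.
    under eq_integral do rewrite EFinM.
    apply: ge0_integralZl_EFin => //.
    by apply/measurable_EFinP; exact: measurableT_comp.
  rewrite ge0_integralZr //; last exact: integral_ge0.
    apply: lte_mul_pinfty.
    - exact: integral_ge0.
    - by rewrite ge0_fin_numE; [case/integrableP: ia|exact: integral_ge0].
    - by case/integrableP: ib.
  by apply/measurable_EFinP; exact: measurableT_comp.
have hL : forall x, (\int[mu]_y F (x, y))%E =
    ((fun s => (u' s * V s)%:E) \_ `[0, t]) x.
  move=> x; rewrite patchE; case: ifPn => xI.
    have := xI; rewrite inIcc => /andP[x0 xt].
    transitivity (\int[mu]_y (((fun y => (u' x * v' y)%:E) \_ `[0%R, x]) y))%E.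
      apply: eq_integral => y _; rewrite /F !patchE.
      have -> : ((x, y) \in T) = (y \in `[0%R, x]%classic).
        apply/idP/idP => [/set_mem [y0 [yx _]]|]; first by rewrite inIcc y0 yx.
        by rewrite inIcc => /andP[y0 yx]; apply/mem_set.
      case: ifPn => // yI; rewrite /a /b !patchE xI.
      have -> // : y \in `[0%R, t]%classic.
      by move: yI; rewrite !inIcc => /andP[-> /le_trans]; apply.
    rewrite -integral_mkcond.
    have ivx : mu.-integrable `[0%R, x] (EFin \o v').
      by apply: integrableS iv => //; apply: subset_itvl; rewrite bnd_simp.
    under eq_integral do rewrite EFinM.
    by rewrite integralZl // -EFin_Rint // EFinM.
  rewrite -[RHS](integral0 mu setT); apply: eq_integral => y _.
  rewrite /F patchE; case: ifPn => // /set_mem [y0 [yx xt]].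
  by move: xI; rewrite inIcc /= (le_trans y0 yx) xt.
have hR : forall y, (\int[mu]_x F (x, y))%E =
    ((fun r => (v' r * (U t - U r))%:E) \_ `[0, t]) y.
  move=> y; rewrite patchE; case: ifPn => yI.
    have := yI; rewrite inIcc => /andP[y0 yt].
    transitivity (\int[mu]_x (((fun x => (u' x * v' y)%:E) \_ `[y, t]) x))%E.
      apply: eq_integral => x _; rewrite /F !patchE.
      have -> : ((x, y) \in T) = (x \in `[y, t]%classic).
        apply/idP/idP => [/set_mem [_ [yx xt]]|]; first by rewrite inIcc yx xt.
        by rewrite inIcc => /andP[yx xt]; apply/mem_set.
      case: ifPn => // xI; rewrite /a /b !patchE yI.
      have -> // : x \in `[0%R, t]%classic.
      by move: xI; rewrite !inIcc => /andP[/(le_trans y0) -> ->].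
    rewrite -integral_mkcond.
    have iuy : mu.-integrable `[y, t] (EFin \o u').
      by apply: integrableS iu => //; apply: subset_itvr; rewrite bnd_simp.
    under eq_integral do rewrite EFinM.
    by rewrite integralZr // -EFin_Rint // prim_diff // muleC.
  rewrite -[RHS](integral0 mu setT); apply: eq_integral => x _.
  rewrite /F patchE; case: ifPn => // /set_mem [y0 [yx xt]].
  by move: yI; rewrite inIcc /= y0 (le_trans yx xt).
have := Fubini iF.
under eq_integral do rewrite hL.
under [X in _ = X -> _]eq_integral do rewrite hR.
rewrite -!integral_mkcond.
have ivc : mu.-integrable `[0, t] (EFin \o (fun r => v' r * U t)).
  by apply: int_mul_cont => // x; exact: cvg_cst.
have ivd : mu.-integrable `[0, t] (EFin \o (fun r => v' r * (U t - U r))).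
  have -> : (fun r => v' r * (U t - U r)) = (fun r => v' r * U t - v' r * U r).
    by apply/funext => r; rewrite mulrBr.
  exact: (integrableB _ ivc iUv).
move=> h.
have -> : \int[mu]_(s in `[0, t]) (u' s * V s) =
          \int[mu]_(s in `[0, t]) (v' s * (U t - U s)).
  by apply: EFin_inj; rewrite (EFin_Rint _ iuV) // (EFin_Rint _ ivd).
under eq_Rintegral do rewrite mulrBr.
rewrite RintegralB // RintegralZr // mulrC.
by congr (_ - _); apply: eq_Rintegral => r _; rewrite mulrC.
Qed.


Lemma ae_zero_of_prim (t : R) (h : R -> R) :
  mu.-integrable `[0, t] (EFin \o h) ->
  (forall s, s \in `[0, t] -> \int[mu]_(x in `[0, s]) h x = 0) ->
  {ae mu, forall x, x \in `]0, t[ -> h x = 0}.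
Proof.
move=> ih h0.
pose g := h \_ `[0, t].
have ig : forall y, mu.-integrable [set` Interval (BLeft 0) (BRight y)] (EFin \o g).
  move=> y; rewrite /g -restrict_EFin; apply/integrable_restrict => //=.
  by apply: integrableS ih => //; apply: measurableI.
have lg : locally_integrable [set: R] g.
  exact: (@integrable_locally_restrict _ h `[0, t]) ih.
have := FTC1 ig lg.
apply: filterS; first exact: (ae_filter_ringOfSetsType mu).
move=> x /= Hx xt.
have x0 : (0%:E < x%:E)%E.
  by rewrite lte_fin; move: xt; rewrite in_itv /= => /andP[].
have <- : g x = h x.
  rewrite /g patchE mem_set //=; move: xt; rewrite !in_itv /= => /andP[a b].
  by rewrite ltW // ltW.
have [_ <-] := Hx x0.
rewrite derive1E.
rewrite (@near_eq_derive _ _ _ _ (cst 0)) ?derive_cst //.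
move: xt; rewrite in_itv /= => /andP[x0' xt].
near=> y.
have y0 : 0 < y by near: y; exact: lt_nbhsr.
have yt : y < t by near: y; exact: lt_nbhsl.
rewrite /cst; transitivity (\int[mu]_(x in `[0, y]) h x); last first.
  by apply: h0; rewrite in_itv /= !ltW.
apply: eq_Rintegral => z; rewrite inE /= in_itv /= => /andP[z0 zy].
rewrite /g patchE mem_set //= in_itv /= z0 /=.
by rewrite (le_trans zy) // ltW.
Unshelve. all: by end_near. Qed.

End H.

Section H2.
Context {R : realType}.
Notation mu := (@lebesgue_measure R).
Definition AC (t : R) (u u' : R -> R) :=
  mu.-integrable `[0, t] (EFin \o u') /\
  forall s, s \in `[0, t] -> u s = u 0 + \int[mu]_(x in `[0, s]) u' x.

Lemma int_sub (t s : R) (f : R -> R) : s <= t ->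
  mu.-integrable `[0, t] (EFin \o f) -> mu.-integrable `[0, s] (EFin \o f).
Proof.
by move=> st fi; apply: integrableS fi => //; apply: subset_itvl; rewrite bnd_simp.
Qed.

Lemma in0t (t : R) : 0 <= t -> 0 \in `[0, t].
Proof. by move=> t0; rewrite in_itv /= lexx t0. Qed.

Lemma AC_int (t : R) u u' : 0 <= t -> AC t u u' ->
  \int[mu]_(x in `[0, t]) u' x = u t - u 0.
Proof.
move=> t0 [_ h]; rewrite (h t); first ring.
by rewrite in_itv /= t0 lexx.
Qed.

Lemma AC_ext (t : R) u v u' : 0 <= t -> {in `[0, t], u =1 v} -> AC t u u' -> AC t v u'.
Proof.
move=> t0 uv [iu h]; split => // s sI.
by rewrite -!uv // ?in0t //; exact: h.
Qed.

Lemma AC_restr (t s : R) u u' : s <= t -> AC t u u' -> AC s u u'.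
Proof.
move=> st [iu h]; split; first exact: int_sub iu.
move=> x; rewrite !in_itv /= => /andP[x0 xs]; apply: h.
by rewrite in_itv /= x0 (le_trans xs st).
Qed.

Lemma AC_cont (t : R) u u' : 0 <= t -> AC t u u' -> {within `[0, t], continuous u}.
Proof.
move=> t0 [iu h].
have c := prim_cont t0 iu.
apply: (@subspace_eq_continuous _ `[0, t] _ (fun x => u 0 + \int[mu]_(y in `[0, x]) u' y) u).
  by move=> x xI; rewrite -h //; move: xI; rewrite inIcc in_itv.
move=> x; apply: cvgD; [exact: cvg_cst | exact: c].
Qed.

Lemma AC_add (t : R) u u' v v' : AC t u u' -> AC t v v' ->
  AC t (fun x => u x + v x) (fun x => u' x + v' x).
Proof.
move=> [iu hu] [iv hv]; split; first exact: (integrableD _ iu iv).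
move=> s sI; rewrite RintegralD //; last 2 first.
- move: sI; rewrite in_itv /= => /andP[_ st]; exact: int_sub iu.
- move: sI; rewrite in_itv /= => /andP[_ st]; exact: int_sub iv.
by rewrite (hu s) // (hv s) // addrACA.
Qed.

Lemma AC_scale (t : R) (k : R) u u' : AC t u u' ->
  AC t (fun x => k * u x) (fun x => k * u' x).
Proof.
move=> [iu hu]; split; first exact: (integrableZl _ k iu).
move=> s sI; rewrite RintegralZl //; last first.
  move: sI; rewrite in_itv /= => /andP[_ st]; exact: int_sub iu.
by rewrite (hu s) // mulrDr.
Qed.

Lemma AC_mul (t : R) u u' v v' : 0 <= t -> AC t u u' -> AC t v v' ->
  AC t (fun x => u x * v x) (fun x => u' x * v x + v' x * u x).
Proof.
move=> t0 hu hv.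
have cu := AC_cont t0 hu; have cv := AC_cont t0 hv.
case: hu => iu hu; case: hv => iv hv.
split; first exact: (integrableD _ (int_mul_cont iu cv) (int_mul_cont iv cu)).
move=> s sI; have := sI; rewrite in_itv /= => /andP[s0 st].
have ius := int_sub st iu; have ivs := int_sub st iv.
have sub : `[0, s] `<=` `[0, t] by apply: subset_itvl; rewrite bnd_simp.
have cus := continuous_subspaceW sub cu; have cvs := continuous_subspaceW sub cv.
have cUs := prim_cont s0 ius; have cVs := prim_cont s0 ivs.
have i1 := int_mul_cont ius cvs; have i2 := int_mul_cont ivs cus.
have i3 := int_mul_cont ius cVs; have i4 := int_mul_cont ivs cUs.
have xt : forall x, x \in `[0, s] -> x \in `[0, t].
  move=> x; rewrite !in_itv /= => /andP[-> xs]; exact: le_trans xs st.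
rewrite RintegralD //.
have e1 : \int[mu]_(x in `[0, s]) (u' x * v x) =
    v 0 * \int[mu]_(x in `[0, s]) u' x +
    \int[mu]_(x in `[0, s]) (u' x * \int[mu]_(y in `[0, x]) v' y).
  rewrite -RintegralZl // -RintegralD //; last exact: (integrableZl _ (v 0) ius).
  apply: eq_Rintegral => x; rewrite inE /= => xI.
  by rewrite (hv x) ?xt //; ring.
have e2 : \int[mu]_(x in `[0, s]) (v' x * u x) =
    u 0 * \int[mu]_(x in `[0, s]) v' x +
    \int[mu]_(x in `[0, s]) (v' x * \int[mu]_(y in `[0, x]) u' y).
  rewrite -RintegralZl // -RintegralD //; last exact: (integrableZl _ (u 0) ivs).
  apply: eq_Rintegral => x; rewrite inE /= => xI.
  by rewrite (hu x) ?xt //; ring.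
have e3 : \int[mu]_(x in `[0, s]) (v' x * \int[mu]_(y in `[0, x]) u' y) =
    \int[mu]_(x in `[0, s]) ((\int[mu]_(y in `[0, x]) u' y) * v' x).
  by apply: eq_Rintegral => x _; rewrite mulrC.
rewrite e1 e2 e3 (ibp_core s0 ius ivs) (hu s) // (hv s) //.
ring.
Qed.

Lemma AC_nil (t : R) (I : Type) (f f' : I -> R -> R) :
  AC t (fun x => \sum_(i <- [::]) f i x) (fun x => \sum_(i <- [::]) f' i x).
Proof.
split.
  apply: (eq_integrable _ _ _ _ (integrable0 mu _)) => //.
  by move=> x _; rewrite /= big_nil.
move=> s _; under eq_Rintegral do rewrite big_nil.
by rewrite big_nil Rintegral_cst ?big_nil ?mul0r ?addr0 //.
Qed.

Lemma AC_sum (t : R) (I : Type) (r : seq I) (f f' : I -> R -> R) :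
  (forall i, AC t (f i) (f' i)) ->
  AC t (fun x => \sum_(i <- r) f i x) (fun x => \sum_(i <- r) f' i x).
Proof.
move=> h; elim: r => [|i r IH]; first exact: AC_nil.
have := AC_add (h i) IH.
have -> : (fun x => \sum_(j <- i :: r) f j x) = (fun x => f i x + \sum_(j <- r) f j x).
  by apply/funext => x; rewrite big_cons.
have -> // : (fun x => \sum_(j <- i :: r) f' j x) = (fun x => f' i x + \sum_(j <- r) f' j x).
by apply/funext => x; rewrite big_cons.
Qed.

Lemma AC_C1 (t : R) u u' : 0 <= t ->
  {within `[0, t], continuous u} -> {within `[0, t], continuous u'} ->
  (forall x, x \in `]0, t[ -> is_derive x 1 u (u' x)) -> AC t u u'.
Proof.
move=> t0 cu cu' du; split.
  by apply: continuous_compact_integrable => //; exact: segment_compact.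
move=> s; rewrite in_itv /= => /andP[s0 st].
have [->|s0'] := eqVneq s 0.
  by rewrite set_itv1 Rintegral_set1 addr0.
have s0'' : 0 < s by rewrite lt_neqAle eq_sym s0' s0.
have sub : `[0, s] `<=` `[0, t] by apply: subset_itvl; rewrite bnd_simp.
have cus := continuous_subspaceW sub cu; have cu's := continuous_subspaceW sub cu'.
have [_ cl cr] := (continuous_within_itvP _ s0'').1 cus.
have xs : forall x, x \in `]0, s[ -> x \in `]0, t[.
  by move=> x; rewrite !in_itv /= => /andP[-> xs]; exact: lt_le_trans xs st.
have := @continuous_FTC2 R u' u 0 s s0'' cu's.
have dF : derivable_oo_LRcontinuous u 0 s.
  split => // x xI; have := du x (xs x xI); by case.
move=> /(_ dF).
have F' : {in `]0, s[, (u^`())%classic =1 u'}.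
  by move=> x xI; rewrite derive1E; have := du x (xs x xI); case.
move=> /(_ F') h.
rewrite /Rintegral h /= ; ring.
Qed.

Lemma ae_pt (a : R) : {ae mu, forall x, x != a}.
Proof.
exists [set a]; split; [exact: measurable_set1|exact: lebesgue_measure_set1|].
by move=> x /= /negP; rewrite negbK => /eqP.
Qed.

Lemma ae_oc (t : R) (P : R -> Prop) :
  {ae mu, forall x, x \in `]0, t[ -> P x} -> {ae mu, forall x, x \in `[0, t] -> P x}.
Proof.
move=> h.
apply: (filterS3 (ae_filter_ringOfSetsType mu) _ h (ae_pt 0) (ae_pt t)) => x hx x0 xt xI.
apply: hx; move: xI; rewrite !in_itv /= => /andP[a b].
by rewrite !lt_neqAle a b eq_sym x0 xt.
Qed.

Lemma Rint_ae (t : R) (f g : R -> R) :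
  measurable_fun `[0, t] f -> measurable_fun `[0, t] g ->
  {ae mu, forall x, x \in `[0, t] -> f x = g x} ->
  \int[mu]_(x in `[0, t]) f x = \int[mu]_(x in `[0, t]) g x.
Proof.
move=> mf mg h; rewrite /Rintegral; congr fine.
apply: ae_eq_integral => //.
- exact/measurable_EFinP.
- exact/measurable_EFinP.
apply: filterS h; first exact: (ae_filter_ringOfSetsType mu).
by move=> x hx xI; rewrite /= hx.
Qed.

Lemma AC_ae (t : R) u u' u'' : 0 <= t -> AC t u u' -> AC t u u'' ->
  {ae mu, forall x, x \in `[0, t] -> u' x = u'' x}.
Proof.
move=> t0 [i1 h1] [i2 h2]; apply: ae_oc.
have i12 : mu.-integrable `[0, t] (EFin \o (fun x => u' x - u'' x)).
  exact: (integrableB _ i1 i2).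
have H := @ae_zero_of_prim R t (fun x => u' x - u'' x) i12.
have : {ae mu, forall x, x \in `]0, t[ -> u' x - u'' x = 0}.
  apply: H => s sI; have := sI; rewrite in_itv /= => /andP[_ st].
  rewrite RintegralB //; [|exact: int_sub i1|exact: int_sub i2].
  by apply/eqP; rewrite subr_eq0; apply/eqP; apply: (@addrI _ (u 0)); rewrite -h1 // -h2.
apply: filterS; first exact: (ae_filter_ringOfSetsType mu).
by move=> x hx xI; apply/eqP; rewrite -subr_eq0; apply/eqP; exact: hx.
Qed.

End H2.

Section M.
Context {R : realType} {n : nat}.
Notation mu := (@lebesgue_measure R).

Lemma bformE (G : 'M[R]_n) (x y : 'rV[R]_n) :
  bform G x y = \sum_k \sum_j x 0 j * G j k * y 0 k.
Proof.
rewrite /bform !mxE; apply: eq_bigr => k _.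
by rewrite !mxE mulr_suml; apply: eq_bigr => j _.
Qed.

Lemma bformDr (G : 'M[R]_n) (x y z : 'rV[R]_n) : bform G x (y + z) = bform G x y + bform G x z.
Proof.
rewrite !bformE -big_split; apply: eq_bigr => k _.
by rewrite -big_split; apply: eq_bigr => j _; rewrite mxE /= mulrDr.
Qed.

Lemma bformZr (G : 'M[R]_n) (x y : 'rV[R]_n) (a : R) : bform G x (a *: y) = a * bform G x y.
Proof.
rewrite !bformE mulr_sumr; apply: eq_bigr => k _.
rewrite mulr_sumr; apply: eq_bigr => j _; rewrite mxE; ring.
Qed.

Lemma bform0r (G : 'M[R]_n) (x : 'rV[R]_n) : bform G x 0 = 0.
Proof. by rewrite -(scale0r 0) bformZr mul0r. Qed.

Lemma AC_bform (t : R) (G : 'M[R]_n) (x x' y y' : R -> 'rV[R]_n) : 0 <= t ->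
  (forall j, AC t (fun s => x s 0 j) (fun s => x' s 0 j)) ->
  (forall k, AC t (fun s => y s 0 k) (fun s => y' s 0 k)) ->
  AC t (fun s => bform G (x s) (y s))
       (fun s => bform G (x' s) (y s) + bform G (x s) (y' s)).
Proof.
move=> t0 hx hy.
have := @AC_sum R t _ (index_enum 'I_n)
  (fun k s => \sum_(j <- index_enum 'I_n) (G j k * x s 0 j) * y s 0 k)
  (fun k s => \sum_(j <- index_enum 'I_n)
     ((G j k * x' s 0 j) * y s 0 k + y' s 0 k * (G j k * x s 0 j))).
have -> : (fun s => \sum_(k <- index_enum 'I_n) \sum_(j <- index_enum 'I_n)
            (G j k * x s 0 j) * y s 0 k) = (fun s => bform G (x s) (y s)).
  apply/funext => s; rewrite bformE; apply: eq_bigr => k _.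
  by apply: eq_bigr => j _; ring.
have -> : (fun s => \sum_(k <- index_enum 'I_n) \sum_(j <- index_enum 'I_n)
     ((G j k * x' s 0 j) * y s 0 k + y' s 0 k * (G j k * x s 0 j))) =
     (fun s => bform G (x' s) (y s) + bform G (x s) (y' s)).
  apply/funext => s; rewrite !bformE -big_split; apply: eq_bigr => k _.
  by rewrite -big_split; apply: eq_bigr => j _ /=; ring.
apply => k; apply: AC_sum => j.
exact: AC_mul t0 (AC_scale (G j k) (hx j)) (hy k).
Qed.

Lemma cont_sum (A : set R) (I : Type) (r : seq I) (f : I -> R -> R) :
  (forall i, {within A, continuous (f i)}) ->
  {within A, continuous (fun x => \sum_(i <- r) f i x)}.
Proof.
move=> h; elim: r => [|i r IH].
  have -> : (fun x => \sum_(i <- [::]) f i x) = (fun=> 0) by apply/funext => x; rewrite big_nil.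
  by move=> x; exact: cvg_cst.
have -> : (fun x => \sum_(j <- i :: r) f j x) = (fun x => f i x + \sum_(j <- r) f j x).
  by apply/funext => x; rewrite big_cons.
by move=> x; apply: cvgD; [exact: h|exact: IH].
Qed.

Lemma cont_mul (A : set R) (f g : R -> R) :
  {within A, continuous f} -> {within A, continuous g} ->
  {within A, continuous (fun x => f x * g x)}.
Proof. by move=> hf hg x; apply: cvgM; [exact: hf|exact: hg]. Qed.

Lemma meas_sum (D : set R) (I : Type) (r : seq I) (f : I -> R -> R) :
  (forall i, measurable_fun D (f i)) ->
  measurable_fun D (fun x => \sum_(i <- r) f i x).
Proof.
move=> h; elim: r => [|i r IH].
  have -> : (fun x => \sum_(i <- [::]) f i x) = (fun=> 0) by apply/funext => x; rewrite big_nil.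
  exact: measurable_cst.
have -> : (fun x => \sum_(j <- i :: r) f j x) = (fun x => f i x + \sum_(j <- r) f j x).
  by apply/funext => x; rewrite big_cons.
exact: measurable_funD.
Qed.

Lemma meas_bform (D : set R) (G : 'M[R]_n) (x y : R -> 'rV[R]_n) :
  (forall j, measurable_fun D (fun s => x s 0 j)) ->
  (forall k, measurable_fun D (fun s => y s 0 k)) ->
  measurable_fun D (fun s => bform G (x s) (y s)).
Proof.
move=> hx hy.
have -> : (fun s => bform G (x s) (y s)) =
   (fun s => \sum_(k <- index_enum 'I_n) \sum_(j <- index_enum 'I_n)
       x s 0 j * G j k * y s 0 k).
  by apply/funext => s; rewrite bformE.
apply: meas_sum => k; apply: meas_sum => j.
by apply: measurable_funM => //; apply: measurable_funM => //.
Qed.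

Lemma cont_mulmx (A : set R) (Y : R -> 'rV[R]_n) (M : R -> 'M[R]_n) k :
  (forall i, {within A, continuous (fun s => Y s 0 i)}) ->
  (forall i j, {within A, continuous (fun s => M s i j)}) ->
  {within A, continuous (fun s => (Y s *m M s) 0 k)}.
Proof.
move=> hY hM.
have -> : (fun s => (Y s *m M s) 0 k) =
   (fun s => \sum_(i <- index_enum 'I_n) Y s 0 i * M s i k).
  by apply/funext => s; rewrite mxE.
by apply: cont_sum => i; apply: cont_mul.
Qed.

Lemma meas_mulmx (D : set R) (Y : R -> 'rV[R]_n) (M : R -> 'M[R]_n) k :
  (forall i, measurable_fun D (fun s => Y s 0 i)) ->
  (forall i j, measurable_fun D (fun s => M s i j)) ->
  measurable_fun D (fun s => (Y s *m M s) 0 k).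
Proof.
move=> hY hM.
have -> : (fun s => (Y s *m M s) 0 k) =
   (fun s => \sum_(i <- index_enum 'I_n) Y s 0 i * M s i k).
  by apply/funext => s; rewrite mxE.
by apply: meas_sum => i; apply: measurable_funM.
Qed.

End M.

Lemma H1s_AC (R : realType) (t : R) f f' : H1s t f f' -> AC t f f'.
Proof. by case=> i [_ h]; split. Qed.

Lemma AC_meas (R : realType) (t : R) u u' : 0 <= t -> AC t u u' ->
  measurable_fun `[0, t] u.
Proof.
move=> t0 h; apply: subspace_continuous_measurable_fun => //.
exact: AC_cont t0 h.
Qed.

Lemma AC_meas' (R : realType) (t : R) u u' : AC t u u' ->
  measurable_fun `[0, t] u'.
Proof. by case=> i _; apply/measurable_EFinP; exact: measurable_int i. Qed.

Unset Implicit Arguments.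
Set Strict Implicit.

Theorem lemma4p7 (R : realType) (n : nat) (G : 'M[R]_n)
  (Rc : R -> 'M[R]_n) (Pm S : 'M[R]_n) (Y Y' : R -> 'rV[R]_n) :
  pl_symmetric_form G -> pl_nondegenerate_form G -> neg_index G 1 ->
  (forall s, s \in `[0, 1] -> g_symmetric G (Rc s)) ->
  (forall i j, {within `[0, 1], continuous (fun s => Rc s i j)}) ->
  pl_nondegenerate_on G Pm ->
  g_symmetric_on G Pm S ->
  (* Y is C^2 on [0,1] with Y'' = R Y *)
  (forall i, {within `[0, 1], continuous (fun s => Y s 0 i)}) ->
  (forall i, {within `[0, 1], continuous (fun s => Y' s 0 i)}) ->
  (forall (i : 'I_n) (s : R), s \in `]0, 1[ -> is_derive s 1 (fun u => Y u 0 i) (Y' s 0 i)) ->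
  (forall (i : 'I_n) (s : R), s \in `]0, 1[ ->
     is_derive s 1 (fun u => Y' u 0 i) ((Y s *m Rc s) 0 i)) ->
  (forall s, s \in `[0, 1] -> bform G (Y s) (Y s) < 0) ->
  (forall t, t \in `]0, 1] ->
     forall V V' W W' : R -> 'rV[R]_n,
       Kspace G Pm Y Y' t V V' -> Sspace Y t W W' ->
       Iform G S Rc t V V' W W' = 0) /\
  (forall V V' W W' : R -> 'rV[R]_n,
       K0hat G Pm Y V V' -> S0hat Y W W' -> C0 G V' W' = 0).
Proof.
move=> Gsym _ _ Rsym Rcont _ _ Ycont Y'cont Yder Y'der _.
have AY1 : forall j, AC 1 (fun s => Y s 0 j) (fun s => Y' s 0 j).
  move=> j; apply: (@AC_C1 R 1 (fun s => Y s 0 j) (fun s => Y' s 0 j)) => //.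
have AY'1 : forall j, AC 1 (fun s => Y' s 0 j) (fun s => (Y s *m Rc s) 0 j).
  move=> j; apply: (@AC_C1 R 1 (fun s => Y' s 0 j) (fun s => (Y s *m Rc s) 0 j)) => //.
  exact: cont_mulmx.
split.
- move=> t tI V V' W W' [[HV [HV0 HVt]] [c Hc]] [HW [f [f' [Hf f0 ft HWf]]]].
  have := tI; rewrite in_itv /= => /andP[t0 t1].
  have t0' := ltW t0.
  have tsub : forall x, x \in `[0, t] -> x \in `[0, 1].
    by move=> x; rewrite !in_itv /= => /andP[-> /le_trans]; apply.
  have AV : forall i, AC t (fun s => V s 0 i) (fun s => V' s 0 i).
    by move=> i; exact: H1s_AC (HV i).
  have AW : forall i, AC t (fun s => W s 0 i) (fun s => W' s 0 i).
    by move=> i; exact: H1s_AC (HW i).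
  have Af : AC t f f' by exact: H1s_AC.
  have AY : forall j, AC t (fun s => Y s 0 j) (fun s => Y' s 0 j).
    by move=> j; exact: AC_restr t1 (AY1 j).
  have AY' : forall j, AC t (fun s => Y' s 0 j) (fun s => (Y s *m Rc s) 0 j).
    by move=> j; exact: AC_restr t1 (AY'1 j).
  have AW' : forall j, AC t (fun s => W s 0 j)
      (fun s => f' s * Y s 0 j + Y' s 0 j * f s).
    move=> j; apply: AC_ext t0' _ (AC_mul t0' Af (AY j)).
    by move=> x xI; rewrite (HWf x) ?mxE.
  have aeW : {ae (@lebesgue_measure R), forall x, forall j, x \in `[0, t] ->
      W' x 0 j = f' x * Y x 0 j + Y' x 0 j * f x}.
    apply: filter_forall => j; exact: AC_ae t0' (AW j) (AW' j).
  pose phi s := bform G (V s) (Y' s).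
  pose phi' s := bform G (V' s) (Y' s) + bform G (V s) (Y s *m Rc s).
  have Aphi : AC t phi phi'.
    exact: (AC_bform G t0' AV AY').
  have Apsi := AC_mul t0' Af Aphi.
  have W0 : W 0 = 0 by rewrite HWf ?in0t // f0 scale0r.
  rewrite /Iform W0 bform0r subr0.
  pose E1 s := c * f' s + (f' s * phi s + phi' s * f s).
  have mRc : forall i j, measurable_fun `[0, t] (fun s => Rc s i j).
    move=> i j; apply: subspace_continuous_measurable_fun => //.
    apply: continuous_subspaceW (Rcont i j).
    by apply: subset_itvl; rewrite bnd_simp.
  have mE0 : measurable_fun `[0, t]
      (fun s => bform G (V' s) (W' s) + bform G (V s *m Rc s) (W s)).
    apply: measurable_funD.
    - by apply: meas_bform => j; [exact: AC_meas' (AV j)|exact: AC_meas' (AW j)].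
    - apply: meas_bform => j; last exact: AC_meas t0' (AW j).
      by apply: meas_mulmx => i; [exact: AC_meas t0' (AV i)|exact: mRc].
  have mE1 : measurable_fun `[0, t] E1.
    apply: measurable_funD; last exact: AC_meas' Apsi.
    by apply: measurable_funM => //; exact: AC_meas' Af.
  rewrite (@Rint_ae R t _ E1 mE0 mE1); last first.
    apply: (filterS2 (ae_filter_ringOfSetsType (@lebesgue_measure R)) _ aeW Hc).
    move=> x hW hc xI.
    have Wx := HWf x xI.
    have W'x : W' x = f' x *: Y x + f x *: Y' x.
      by apply/rowP => j; rewrite !mxE (hW j xI) [Y' x 0 j * _]mulrC.
    rewrite Wx W'x bformDr !bformZr (Rsym x (tsub x xI)) /E1 /phi /phi' -(hc xI).
    ring.
  have [iff' _] := Af; have [ipsi _] := Apsi.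
  rewrite /E1 RintegralD //; last exact: (integrableZl _ c iff').
  rewrite RintegralZl // (AC_int t0' Af) (AC_int t0' Apsi) f0 ft.
  ring.
- move=> V V' W W' [[HV [HV0 HV1]] [c Hc]] [HW [f [f' [Hf f0 f1 HWf]]]].
  have t0' : (0 : R) <= 1 by [].
  have AV : forall i, AC 1 (fun s => V s 0 i) (fun s => V' s 0 i).
    by move=> i; exact: H1s_AC (HV i).
  have AW : forall i, AC 1 (fun s => W s 0 i) (fun s => W' s 0 i).
    by move=> i; exact: H1s_AC (HW i).
  have Af : AC 1 f f' by exact: H1s_AC.
  have AW' : forall j, AC 1 (fun s => W s 0 j) (fun s => Y 0 0 j * f' s).
    move=> j; apply: AC_ext t0' _ (AC_scale (Y 0 0 j) Af).
    by move=> x xI; rewrite (HWf x) ?mxE // mulrC.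
  have aeW : {ae (@lebesgue_measure R), forall x, forall j, x \in `[0, 1] ->
      W' x 0 j = Y 0 0 j * f' x}.
    apply: filter_forall => j; exact: AC_ae t0' (AW j) (AW' j).
  pose E1 s := c * f' s.
  have mE0 : measurable_fun `[0, (1 : R)] (fun s => bform G (V' s) (W' s)).
    by apply: meas_bform => j; [exact: AC_meas' (AV j)|exact: AC_meas' (AW j)].
  have mE1 : measurable_fun `[0, (1 : R)] E1.
    by apply: measurable_funM => //; exact: AC_meas' Af.
  rewrite /C0 (@Rint_ae R 1 _ E1 mE0 mE1); last first.
    apply: (filterS2 (ae_filter_ringOfSetsType (@lebesgue_measure R)) _ aeW Hc).
    move=> x hW hc xI.
    have W'x : W' x = f' x *: Y 0.
      by apply/rowP => j; rewrite !mxE (hW j xI) mulrC.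
    by rewrite W'x bformZr (hc xI) /E1 mulrC.
  have [iff' _] := Af.
  by rewrite /E1 RintegralZl // (AC_int t0' Af) f0 f1 subrr mulr0.
Qed.
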